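(* Any two demicaps in $AG(4,3)$ are affinely equivalent: if $D_1,D_2$ are demicaps, there is an affine transformation $v\mapsto Av+b$ with $A\in GL(4,3)$, $b\in\mathbb{F}_3^4$, mapping $D_1$ onto $D_2$.
   Context: $AG(4,3)$ is the affine space $\mathbb{F}_3^4$; a line is a set of three distinct points $\{x,y,z\}$ with $x+y+z=0$. A cap is a set of points containing no line. A hyperplane is a $3$-dimensional affine subspace of $\mathbb{F}_3^4$; a set of points is co-hyperplanar if it lies in a common hyperplane. For a point $a$, an $a$-line is a pair of points $\{b,c\}$ such that $\{a,b,c\}$ is a line. A demicap with anchor point $a$ is a cap consisting of the $10$ points of five $a$-lines such that no four of these five $a$-lines are co-hyperplanar. *)

(* Defs.v *)
(* AG(4,3) = F_3^4, points are row vectors 'rV['F_3]_4. *)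
From HB Require Import structures.
From mathcomp Require Import all_boot all_order all_algebra all_fingroup.
Set Implicit Arguments. Unset Strict Implicit. Unset Printing Implicit Defensive.
Import GRing.Theory.
Local Open Scope ring_scope.

Definition point := 'rV['F_3]_4.

Definition is_line (x y z : point) : bool :=
  [&& x != y, y != z, x != z & x + y + z == 0].

Definition is_cap (D : {set point}) : Prop :=
  forall x y z, x \in D -> y \in D -> z \in D -> ~~ is_line x y z.

Definition is_hyperplane (H : {set point}) : Prop :=
  exists (p : point) (V : 'M['F_3]_4),
    \rank V = 3%N /\ H = [set x : point | (x - p <= V)%MS].

Definition cohyperplanar (S : {set point}) : Prop :=
  exists H, is_hyperplane H /\ S \subset H.

Definition demicap_anchor (a : point) (D : {set point}) : Prop :=
  is_cap D /\
  exists b c : 'I_5 -> point,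
    [/\ forall i, is_line a (b i) (c i),
        D = \bigcup_(i < 5) [set b i; c i],
        #|D| = 10%N &
        forall I : {set 'I_5}, #|I| = 4%N ->
          ~ cohyperplanar (\bigcup_(i in I) [set b i; c i])].

Definition demicap (D : {set point}) : Prop := exists a, demicap_anchor a D.

(* Main.v *)
Require Import Defs.
From HB Require Import structures.
From mathcomp Require Import all_boot all_order all_algebra all_fingroup.
From mathcomp Require Import ring.
Local Open Scope ring_scope.
Import GRing.Theory.

Lemma sq1 (x : 'F_3) : x != 0 -> x * x = 1.
Proof. by case: x => [[|[|[|]]]] //= Hx _; apply/val_inj. Qed.

Lemma pm1 (x : 'F_3) : x != 0 -> x = 1 \/ x = -1.
Proof.
case: x => [[|[|[|]]]] //= Hx _; [left|right]; by apply/val_inj.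
Qed.

Lemma three0 : (3%:R : 'F_3) = 0.
Proof. by apply/val_inj. Qed.

Lemma m1n0 : (-1 : 'F_3) != 0.
Proof. by []. Qed.

Lemma line_c (x y z : point) : x + y + z = 0 -> z = x - (y - x).
Proof.
move/matrixP=> h; apply/matrixP=> i j; move: (h i j); rewrite !mxE => e.
have -> : z i j = - x i j - y i j.
  by apply/eqP; rewrite -subr_eq0 -e; apply/eqP; ring.
transitivity (x i j - (y i j - x i j) - x i j * 3%:R); first by ring.
by rewrite three0 mulr0 subr0.
Qed.

Lemma rank3 (M : 'M['F_3]_4) : ~~ (M \in unitmx) ->
  exists V : 'M['F_3]_4, \rank V = 3%N /\ (M <= V)%MS.
Proof.
move=> nU; set C := cokermx M.
have rkC: \rank C != 0%N.
  rewrite mxrank_coker; move: nU; rewrite -row_free_unit /row_free => h.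
  by rewrite subn_eq0 -ltnNge ltn_neqAle h rank_leq_col.
case: (pickP (fun j => col j C != 0)) => [j hj | h0]; last first.
  exfalso; move/negP: rkC; apply; rewrite mxrank_eq0; apply/eqP/matrixP => i j.
  have := h0 j; move/negbFE/eqP/matrixP/(_ i 0); rewrite !mxE; done.
exists (kermx (col j C)); split.
  rewrite mxrank_ker.
  have -> : \rank (col j C) = 1%N.
    by apply/eqP; rewrite eqn_leq rank_leq_col lt0n mxrank_eq0 hj.
  by [].
by rewrite sub_kermx colE mulmxA mulmx_coker mul0mx eqxx.
Qed.

Definition v0 (i : 'I_5) : point :=
  if unlift ord_max i is Some r then delta_mx 0 r else const_mx 1.
Definition D0 : {set point} := \bigcup_(i < 5) [set v0 i; - v0 i].

Lemma fin_pair (A : 'M['F_3]_4) (a x p : point) (s : 'F_3) :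
  s != 0 -> x *m A = s *: p ->
  [set y *m A + a | y in [set x; - x]] = [set p + a; a - p].
Proof.
move=> hs hx; rewrite imsetU1 imset_set1 mulNmx hx.
case: (pm1 s hs) => ->; first by rewrite scale1r [- p + a]addrC.
by rewrite scaleN1r opprK setUC [- p + a]addrC.
Qed.

Lemma normal a D : demicap_anchor a D ->
  exists (A : 'M['F_3]_4) (t : point),
    A \in unitmx /\ D = [set x *m A + t | x in D0].
Proof.
case=> _ [b [c [hl -> _ hI]]].
pose u i := b i - a.
have hc : forall i, c i = a - u i.
  by move=> i; have := hl i; case/and4P=> _ _ _ /eqP h; apply: line_c.
pose U : 'M['F_3]_(5,4) := \matrix_i u i.
have H1 : forall k, rowsub (lift k) U \in unitmx.
  move=> k; apply/negPn/negP => nU; have [V [rkV sMV]] := rank3 _ nU.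
  apply: (hI [set~ k]); first by rewrite cardsC1 card_ord.
  exists [set x | (x - a <= V)%MS]; split; first by exists a, V.
  apply/subsetP => x /bigcupP [i]; rewrite in_setC1 => hik.
  have hu : (u i <= V)%MS.
    case: (unliftP k i) => [r e|e]; last by rewrite e eqxx in hik.
    have -> : u i = row r (rowsub (lift k) U) by rewrite row_rowsub rowK e.
    exact: submx_trans (row_sub _ _) sMV.
  rewrite !inE => /orP[]/eqP->; first exact: hu.
  by rewrite hc addrAC subrr add0r eqmx_opp.
have H2 : forall k (mu : 'rV_5), mu 0 k = 0 -> mu *m U = 0 -> mu = 0.
  move=> k mu hk hU.
  set nu : 'rV_4 := \row_r mu 0 (lift k r).
  have hnu : nu *m rowsub (lift k) U = 0.
    rewrite -hU !mulmx_sum_row (bigD1_ord k) //= hk scale0r add0r.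
    by apply: eq_bigr => r _; rewrite mxE row_rowsub.
  have nu0 : nu = 0.
    by have := congr1 (mulmx^~ (invmx (rowsub (lift k) U))) hnu;
       rewrite mulmxK ?H1 // mul0mx.
  apply/matrixP => i0 i; rewrite ord1 mxE.
  case: (unliftP k i) => [r ->|->]; last by rewrite hk.
  by move/matrixP: nu0 => /(_ 0 r); rewrite !mxE.
set A0 := rowsub (lift ord_max) U.
set lam := row ord_max U *m invmx A0.
have elam : lam *m A0 = row ord_max U by rewrite mulmxKV // H1.
have hlam : forall j, lam 0 j != 0.
  move=> j; apply/negP=> /eqP hj.
  set mu : 'rV_5 := \row_i (if unlift ord_max i is Some r then lam 0 r else -1).
  have hmu : mu *m U = 0.
    rewrite mulmx_sum_row (bigD1_ord ord_max) //= mxE unlift_none.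
    rewrite scaleN1r -elam mulmx_sum_row.
    have -> : \sum_(i < 4) mu 0 (lift ord_max i) *: row (lift ord_max i) U
              = \sum_i lam 0 i *: row i A0.
      by apply: eq_bigr => i _; rewrite mxE liftK row_rowsub.
    by rewrite addNr.
  have := H2 (lift ord_max j) mu; rewrite mxE liftK hj => /(_ erefl hmu) mu0.
  move/matrixP: mu0 => /(_ 0 ord_max); rewrite !mxE unlift_none.
  by move/eqP; rewrite (negbTE m1n0).
pose A := diag_mx lam *m A0.
exists A, a; split.
  rewrite unitmx_mul H1 andbT unitmxE det_diag unitfE.
  by apply/prodf_neq0 => i _; apply: hlam.
rewrite /D0 (big_morph _ (imsetU _) (imset0 _)).
apply: eq_bigr => i _.
have hb : b i = u i + a by rewrite /u /= -addrA addNr addr0.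
rewrite hb hc.
case: (unliftP ord_max i) => [r ->|->].
  apply/esym/(@fin_pair _ _ _ _ (lam 0 r)); first exact: hlam.
  rewrite /v0 liftK /A mulmxA -rowE row_diag_mx -scalemxAl -rowE.
  by rewrite row_rowsub rowK.
apply/esym/(@fin_pair _ _ _ _ 1); first by [].
rewrite /v0 unlift_none /A mulmxA scale1r.
have -> : const_mx 1 *m diag_mx lam = lam.
  by apply/matrixP => i0 j; rewrite mul_mx_diag !mxE mul1r ord1.
by rewrite elam rowK.
Qed.

Theorem theorem3p6 (D1 D2 : {set point}) :
  demicap D1 -> demicap D2 ->
  exists (A : 'M['F_3]_4) (b : point),
    A \in unitmx /\ [set x *m A + b | x in D1] = D2.
Proof.
move=> [a1 h1] [a2 h2].
have [A1 [t1 [u1 ->]]] := normal _ _ h1.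
have [A2 [t2 [u2 ->]]] := normal _ _ h2.
exists (invmx A1 *m A2), (t2 - t1 *m (invmx A1 *m A2)); split.
  by rewrite unitmx_mul unitmx_inv u1 u2.
rewrite -imset_comp; apply: eq_imset => x /=.
by rewrite mulmxDl [t2 - _]addrC addrA addrK mulmxA mulmxK.
Qed.
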